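(* Let $n\geq 2$ and let $\nu,\tilde\nu$ be real numbers with $\nu^2+\tilde\nu^2>0$. Then for any $z_0$, the h-sphere $S^{2n}\!\left(z_0;\dfrac{\nu}{\nu^2+\tilde\nu^2},\dfrac{-\tilde\nu}{\nu^2+\tilde\nu^2}\right)$ in $(\mathbb{R}^{2n+2},g,J)$ has constant totally real sectional curvatures $\nu$ and $\tilde\nu$.
   Context: On $\mathbb{R}^{2n+2}$ with points $Z=(x^1,\dots,x^{n+1};y^1,\dots,y^{n+1})$, let $J(x;y)=(y;-x)$, $g(Z,W)=\sum_k x_Z^kx_W^k-\sum_k y_Z^ky_W^k$, $\tilde g(Z,W)=g(JZ,W)$; this is a flat Kähler manifold with Norden metric. For $z_0$ with position vector $Z_0$ and $(a,b)\neq(0,0)$, the h-sphere is $S^{2n}(z_0;a,b)=\{Z: g(Z-Z_0,Z-Z_0)=a,\ \tilde g(Z-Z_0,Z-Z_0)=b\}$, a $2n$-dimensional submanifold with $J$-invariant tangent spaces on which $g$ is nondegenerate; it carries the induced metric and its Levi-Civita connection $\nabla$. Curvature: $R(X,Y)Z=\nabla_X\nabla_YZ-\nabla_Y\nabla_XZ-\nabla_{[X,Y]}Z$, $R(x,y,z,u)=g(R(x,y)z,u)$, $\tilde R(x,y,z,u)=R(x,y,z,Ju)$, $\pi_1(x,y,z,u)=g(y,z)g(x,u)-g(x,z)g(y,u)$; for a $g$-nondegenerate 2-plane $\beta$ with basis $x,y$, $K(\beta;p)=R(x,y,y,x)/\pi_1(x,y,y,x)$, $\tilde K(\beta;p)=\tilde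 R(x,y,y,x)/\pi_1(x,y,y,x)$; $\beta$ is totally real if $\beta\neq J\beta$, $\beta\perp_gJ\beta$. Constant totally real sectional curvatures $\nu,\tilde\nu$ means $K(\beta;p)=\nu$, $\tilde K(\beta;p)=\tilde\nu$ for all $p$ and all nondegenerate totally real $\beta\subset T_p$. *)

(* Defs.v *)
From HB Require Import structures.
From mathcomp Require Import all_boot all_order all_algebra.
From mathcomp Require Import all_classical all_reals all_analysis.
Set Implicit Arguments. Unset Strict Implicit. Unset Printing Implicit Defensive.
Import Order.TTheory GRing.Theory Num.Theory.
Import numFieldNormedType.Exports.
Local Open Scope classical_set_scope.
Local Open Scope ring_scope.

Section HSphere.
Variables (R : realType) (n : nat).

(* R^{2n+2}: a point Z = (x^1..x^{n+1}; y^1..y^{n+1}) is a row vector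
   whose left block (size n+1) is x and right block (size n+1) is y. *)
Definition pt := 'rV[R]_(n.+1 + n.+1).

Definition Jop (Z : pt) : pt := row_mx (rsubmx Z) (- lsubmx Z).

Definition gN (Z W : pt) : R :=
  \sum_(k < n.+1) lsubmx Z 0 k * lsubmx W 0 k
  - \sum_(k < n.+1) rsubmx Z 0 k * rsubmx W 0 k.
Definition gtN (Z W : pt) : R := gN (Jop Z) W.

Definition hsphere (Z0 : pt) (a b : R) : set pt :=
  [set Z | gN (Z - Z0) (Z - Z0) = a /\ gtN (Z - Z0) (Z - Z0) = b].

(* tangent space at p of the h-sphere centered at Z0: kernel of the
   differential of Z |-> (g(Z-Z0,Z-Z0), g~(Z-Z0,Z-Z0)) *)
Definition tangentv (Z0 p v : pt) : Prop :=
  gN (p - Z0) v = 0 /\ gN (Jop (p - Z0)) v = 0.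

(* g-orthogonal projection onto the tangent space at p, i.e. w minus its
   g-orthogonal component on the normal plane span(p-Z0, J(p-Z0)).
   With P = p-Z0, a = g(P,P), b = g(JP,P) (so g(JP,JP) = -a). *)
Definition tanproj (Z0 p w : pt) : pt :=
  let P := p - Z0 in
  let a := gN P P in
  let b := gN (Jop P) P in
  let gP := gN w P in
  let gJ := gN w (Jop P) in
  w - (((a * gP + b * gJ) / (a ^+ 2 + b ^+ 2)) *: P
       + ((b * gP - a * gJ) / (a ^+ 2 + b ^+ 2)) *: Jop P).

Fixpoint iterD (vs : seq pt) (f : pt -> pt) : pt -> pt :=
  match vs with
  | [::] => f
  | v :: vs' => fun q => derive (iterD vs' f) q v
  end.
Definition smooth_field (f : pt -> pt) : Prop :=
  forall (vs : seq pt) (q : pt), differentiable (iterD vs f) q.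

Definition tangent_field (Z0 : pt) (a b : R) (X : pt -> pt) : Prop :=
  smooth_field X /\ forall p, hsphere Z0 a b p -> tangentv Z0 p (X p).

(* induced Levi-Civita connection (Gauss formula): tangential part of the
   flat ambient derivative *)
Definition nabla (Z0 : pt) (X Y : pt -> pt) : pt -> pt :=
  fun p => tanproj Z0 p (derive Y p (X p)).

Definition lieb (X Y : pt -> pt) : pt -> pt :=
  fun p => derive Y p (X p) - derive X p (Y p).

Definition curv (Z0 : pt) (X Y Z : pt -> pt) : pt -> pt :=
  fun p => nabla Z0 X (nabla Z0 Y Z) p - nabla Z0 Y (nabla Z0 X Z) p
           - nabla Z0 (lieb X Y) Z p.

Definition pi1 (x y : pt) : R := gN y y * gN x x - gN x y * gN y x.

Definition in_span2 (x y v : pt) : Prop := exists c d : R, v = c *: x + d *: y.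
Definition totally_real (x y : pt) : Prop :=
  ~ (in_span2 x y (Jop x) /\ in_span2 x y (Jop y)) /\
  gN x (Jop x) = 0 /\ gN x (Jop y) = 0 /\ gN y (Jop x) = 0 /\ gN y (Jop y) = 0.

(* The h-sphere has constant totally real sectional curvatures nu, nut:
   for every p on it and every nondegenerate totally real 2-plane with basis
   x, y in T_p, K = R(x,y,y,x)/pi1 = nu and K~ = R(x,y,y,Jx)/pi1 = nut.
   R(x,y)y at p is computed from any tangent fields X, Y extending x, y. *)
Definition const_totally_real_curv (Z0 : pt) (a b nu nut : R) : Prop :=
  forall (p x y : pt), hsphere Z0 a b p ->
    tangentv Z0 p x -> tangentv Z0 p y ->
    pi1 x y != 0 -> totally_real x y ->
    forall X Y : pt -> pt, tangent_field Z0 a b X -> tangent_field Z0 a b Y ->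
      X p = x -> Y p = y ->
      gN (curv Z0 X Y Y p) x / pi1 x y = nu /\
      gN (curv Z0 X Y Y p) (Jop x) / pi1 x y = nut.

End HSphere.

(* Main.v *)
Require Import Defs.
From HB Require Import structures.
From mathcomp Require Import all_boot all_order all_algebra.
From mathcomp Require Import all_classical all_reals all_analysis.
From mathcomp Require Import ring lra.
Import Order.TTheory GRing.Theory Num.Theory.
Import numFieldNormedType.Exports.
Local Open Scope ring_scope.
Set Implicit Arguments. Unset Strict Implicit. Unset Printing Implicit Defensive.

Section Alg.
Variables (R : realType) (n : nat).
Local Notation V := (pt R n).
Implicit Types Z W U : V.

Lemma gNE Z W : gN Z W = \sum_(k < n.+1)
  (Z 0 (lshift _ k) * W 0 (lshift _ k) - Z 0 (rshift _ k) * W 0 (rshift _ k)).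
Proof. by rewrite /gN sumrB; congr (_ - _); apply: eq_bigr => k _; rewrite !mxE. Qed.

Lemma Jl Z k : Jop Z 0 (lshift _ k) = Z 0 (rshift _ k).
Proof. by rewrite /Jop row_mxEl mxE. Qed.
Lemma Jr Z k : Jop Z 0 (rshift _ k) = - Z 0 (lshift _ k).
Proof. by rewrite /Jop row_mxEr !mxE. Qed.

Lemma gN_sym Z W : gN Z W = gN W Z.
Proof. by rewrite !gNE; apply: eq_bigr => k _; ring. Qed.
Lemma gNDl Z W U : gN (Z + W) U = gN Z U + gN W U.
Proof. rewrite !gNE -big_split; apply: eq_bigr => k _; rewrite !mxE /=; ring. Qed.
Lemma gNZl c Z W : gN (c *: Z) W = c * gN Z W.
Proof. by rewrite !gNE mulr_sumr; apply: eq_bigr => k _; rewrite !mxE; ring. Qed.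
Lemma gNNl Z W : gN (- Z) W = - gN Z W.
Proof. by rewrite -scaleN1r gNZl mulN1r. Qed.
Lemma gNBl Z W U : gN (Z - W) U = gN Z U - gN W U.
Proof. by rewrite gNDl gNNl. Qed.
Lemma gN0l W : gN 0 W = 0.
Proof. by rewrite -(scale0r (0:V)) gNZl mul0r. Qed.
Lemma gNDr Z W U : gN U (Z + W) = gN U Z + gN U W.
Proof. by rewrite !(gN_sym U) gNDl. Qed.
Lemma gNZr c Z W : gN W (c *: Z) = c * gN W Z.
Proof. by rewrite !(gN_sym W) gNZl. Qed.
Lemma gNNr Z W : gN W (- Z) = - gN W Z.
Proof. by rewrite !(gN_sym W) gNNl. Qed.
Lemma gNBr Z W U : gN U (Z - W) = gN U Z - gN U W.
Proof. by rewrite gNDr gNNr. Qed.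
Lemma gN0r W : gN W 0 = 0.
Proof. by rewrite gN_sym gN0l. Qed.

Lemma gN_J Z W : gN (Jop Z) W = gN Z (Jop W).
Proof.
rewrite !gNE; apply: eq_bigr => k _; rewrite !Jl !Jr; ring.
Qed.
Lemma gN_JJ Z W : gN (Jop Z) (Jop W) = - gN Z W.
Proof.
rewrite !gNE -sumrN; apply: eq_bigr => k _; rewrite !Jl !Jr; ring.
Qed.

Lemma JopD Z W : Jop (Z + W) = Jop Z + Jop W.
Proof. by rewrite /Jop !linearD /= add_row_mx. Qed.
Lemma JopZ c Z : Jop (c *: Z) = c *: Jop Z.
Proof. by rewrite /Jop !linearZ /= scale_row_mx scalerN. Qed.
Lemma JopN Z : Jop (- Z) = - Jop Z.
Proof. by rewrite -scaleN1r JopZ scaleN1r. Qed.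
Lemma JopB Z W : Jop (Z - W) = Jop Z - Jop W.
Proof. by rewrite JopD JopN. Qed.
Lemma Jop0 : Jop (0 : V) = 0.
Proof. by rewrite /Jop !linear0 ?oppr0 row_mx0. Qed.
Lemma JopJ Z : Jop (Jop Z) = - Z.
Proof.
by rewrite /Jop row_mxKl row_mxKr -opp_row_mx hsubmxK.
Qed.

End Alg.

Section Calc.
Variables (R : realType) (U : normedModType R).
Implicit Types (a v : U).

Lemma isd_cst (W : normedModType R) a v (w : W) : is_derive a v (fun _ => w) 0.
Proof. exact: is_derive_cst. Qed.

Lemma isd_D (W : normedModType R) a v (f g : U -> W) df dg :
  is_derive a v f df -> is_derive a v g dg ->
  is_derive a v (fun q => f q + g q) (df + dg).
Proof. move=> H1 H2; exact: (@is_deriveD _ _ _ f g). Qed.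

Lemma isd_N (W : normedModType R) a v (f : U -> W) df :
  is_derive a v f df -> is_derive a v (fun q => - f q) (- df).
Proof. move=> H1; exact: (@is_deriveN _ _ _ f). Qed.

Lemma isd_B (W : normedModType R) a v (f g : U -> W) df dg :
  is_derive a v f df -> is_derive a v g dg ->
  is_derive a v (fun q => f q - g q) (df - dg).
Proof. by move=> H1 H2; apply: isd_D => //; apply: isd_N. Qed.

Lemma isd_M a v (f g : U -> R) df dg :
  is_derive a v f df -> is_derive a v g dg ->
  is_derive a v (fun q => f q * g q) (f a * dg + g a * df).
Proof. move=> H1 H2; exact: (@is_deriveM _ _ f g). Qed.

Lemma isd_V a v (f : U -> R) df : f a != 0 ->
  is_derive a v f df -> is_derive a v (fun q => (f q)^-1) (- (f a) ^- 2 * df).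
Proof.
move=> fa [d1 d2]; split; first exact: derivableV.
by rewrite deriveV // d2.
Qed.

Lemma isd_sum (W : normedModType R) m a v (h : 'I_m -> U -> W) dh :
  (forall i, is_derive a v (h i) (dh i)) ->
  is_derive a v (fun q => \sum_(i < m) h i q) (\sum_(i < m) dh i).
Proof. by move=> H; rewrite -fct_sumE; apply: is_derive_sum. Qed.

Lemma isd_ext (W : normedModType R) a v (f g : U -> W) df :
  f =1 g -> is_derive a v f df -> is_derive a v g df.
Proof. by move=> /funext ->. Qed.

Lemma isd_val (W : normedModType R) a v (f : U -> W) df df' :
  df = df' -> is_derive a v f df -> is_derive a v f df'.
Proof. by move=> ->. Qed.

Lemma isd_der (W : normedModType R) a v (f : U -> W) df :
  is_derive a v f df -> derive f a v = df.
Proof. by case. Qed.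

Lemma isd_diff (W : normedModType R) a v (f : U -> W) :
  differentiable f a -> is_derive a v f ('d f a v).
Proof. by move=> df; split; [exact: diff_derivable | exact: deriveE]. Qed.

Section Mx.
Variables (m k : nat).
Implicit Types (F : U -> 'M[R]_(m, k)) (dF : 'M[R]_(m, k)).

Lemma isd_entry a v F dF i j :
  is_derive a v F dF -> is_derive a v (fun q => F q i j) (dF i j).
Proof.
move=> [d1 d2]; split; first exact: (derivable_mxP F a v).1.
by rewrite -d2 derive_mx // mxE.
Qed.

Lemma isd_mx a v F dF :
  (forall i j, is_derive a v (fun q => F q i j) (dF i j)) -> is_derive a v F dF.
Proof.
move=> H; have d1 : derivable F a v.
  by apply/(derivable_mxP F a v) => i j; case: (H i j).
split => //; rewrite derive_mx //; apply/matrixP => i j; rewrite mxE.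
by case: (H i j).
Qed.

Lemma isd_Z a v (c : U -> R) dc F dF :
  is_derive a v c dc -> is_derive a v F dF ->
  is_derive a v (fun q => c q *: F q) (dc *: F a + c a *: dF).
Proof.
move=> Hc HF; apply: isd_mx => i j.
apply: (@isd_ext _ _ _ (fun q => c q * F q i j)); first by move=> q; rewrite mxE.
apply: isd_val (isd_M Hc (isd_entry i j HF)); rewrite !mxE; ring.
Qed.
End Mx.

Section Pt.
Variable n : nat.
Local Notation V := (pt R n).
Implicit Types (F G : U -> V).

Lemma isd_gN a v F G dF dG :
  is_derive a v F dF -> is_derive a v G dG ->
  is_derive a v (fun q => gN (F q) (G q)) (gN dF (G a) + gN (F a) dG).
Proof.
move=> HF HG; apply: (@isd_ext _ _ _ (fun q => \sum_(k < n.+1)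
  (F q 0 (lshift _ k) * G q 0 (lshift _ k) - F q 0 (rshift _ k) * G q 0 (rshift _ k)))).
  by move=> q; rewrite gNE.
apply: isd_val; last first.
  apply: isd_sum => k; apply: isd_B; apply: isd_M; apply: isd_entry; eassumption.
by rewrite !gNE -big_split; apply: eq_bigr => k _ /=; ring.
Qed.

Lemma isd_J a v F dF :
  is_derive a v F dF -> is_derive a v (fun q => Jop (F q)) (Jop dF).
Proof.
move=> HF; apply: isd_mx => i j; rewrite (ord1 i).
case: (splitP j) => k Hk.
- have -> : j = lshift _ k by apply/ord_inj.
  apply: (@isd_ext _ _ _ (fun q => F q 0 (rshift _ k))); first by move=> q; rewrite Jl.
  by rewrite Jl; apply: isd_entry.
- have -> : j = rshift _ k by apply/ord_inj.
  apply: (@isd_ext _ _ _ (fun q => - F q 0 (lshift _ k))); first by move=> q; rewrite Jr.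
  by rewrite Jr; apply: isd_N; apply: isd_entry.
Qed.

End Pt.
End Calc.

Section Schwarz.
Variables (R : realType) (U : normedModType R).

Lemma line_isd (W : normedModType R) (G : U -> W) c z s :
  derivable G (c + s *: z) z ->
  is_derive s 1 (fun t : R => G (c + t *: z)) (derive G (c + s *: z) z).
Proof.
have E : (fun h : R => h^-1 *: (((fun t : R => G (c + t *: z)) \o shift s) (h *: 1)
            - G (c + s *: z))) =
         (fun h : R => h^-1 *: ((G \o shift (c + s *: z)) (h *: z) - G (c + s *: z))).
  apply/funext => h /=; congr (_ *: (G _ - _)).
  by rewrite [h%:A]mulr1 scalerDl addrCA.
move=> dG; split; first by rewrite /derivable E.
by rewrite /derive E.
Qed.

Lemma mvt0 (g dg : R -> R) (h : R) : 0 < h -> (forall s : R, is_derive s (1:R) g (dg s)) ->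
  exists2 c, 0 < c < h & g h - g 0 = dg c * h.
Proof.
move=> h0 Hg.
have gc : continuous g.
  move=> x; apply: differentiable_continuous; apply/derivable1_diffP.
  by case: (Hg x).
have [c cin E] := MVT h0 (fun x _ => Hg x) (continuous_subspaceT gc).
exists c; first by move: cin; rewrite in_itv.
by rewrite E subr0.
Qed.

Lemma mvt2 (F : U -> R) p u w h : 0 < h -> (forall q, differentiable F q) ->
  (forall q, differentiable (fun q => derive F q u) q) ->
  exists xi eta, [/\ 0 < xi < h, 0 < eta < h &
    F (p + h *: w + h *: u) - F (p + h *: u) - F (p + h *: w) + F p =
    derive (fun q => derive F q u) (p + xi *: u + eta *: w) w * (h * h)].
Proof.
move=> h0 dF dG.
pose g := fun s : R => F (p + h *: w + s *: u) - F (p + s *: u).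
pose dg := fun s : R => derive F (p + h *: w + s *: u) u - derive F (p + s *: u) u.
have Hg : forall s : R, is_derive s (1:R) g (dg s).
  move=> s; apply: isd_B; apply: line_isd; exact: diff_derivable.
have [xi xiin E1] := mvt0 h0 Hg.
pose k := fun t : R => derive F (p + xi *: u + t *: w) u.
have Hk : forall t : R, is_derive t (1:R) k (derive (fun q => derive F q u) (p + xi *: u + t *: w) w).
  move=> t; apply: line_isd; exact: diff_derivable.
have [eta etain E2] := mvt0 h0 Hk.
exists xi, eta; split => //.
have -> : F (p + h *: w + h *: u) - F (p + h *: u) - F (p + h *: w) + F p = g h - g 0.
  by rewrite /g !scale0r !addr0; ring.
rewrite E1 /dg mulrA -E2 /k !scale0r !addr0.
by rewrite [p + h *: w + xi *: u]addrAC.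
Qed.

Lemma near_ball (W : normedModType R) (H : U -> W) p e : 0 < e ->
  {for p, continuous H} ->
  exists2 d : R, 0 < d & forall q, `|p - q| < d -> `|H p - H q| < e.
Proof.
move=> e0 Hc.
have Hn : \forall t \near p, `|H p - H t| < e.
  by move/cvgrPdist_lt : Hc; apply.
have := (nbhs_ballP _ _).1 Hn => -[d d0 Hd]; exists d => // q hq; apply: Hd.
by rewrite -ball_normE /=.
Qed.

Lemma schwarz_scalar (F : U -> R) p u w :
  (forall q, differentiable F q) ->
  (forall z q, differentiable (fun q => derive F q z) q) ->
  {for p, continuous (fun q => derive (fun q => derive F q u) q w)} ->
  {for p, continuous (fun q => derive (fun q => derive F q w) q u)} ->
  derive (fun q => derive F q u) p w = derive (fun q => derive F q w) p u.
Proof.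
move=> dF dG c1 c2.
set A := derive _ p w; set B := derive _ p u.
apply/eqP; apply/negPn/negP => AB.
have e0 : 0 < `|A - B| / 2 by rewrite divr_gt0 // normr_gt0 subr_eq0.
have [d1 d10 H1] := near_ball e0 c1.
have [d2 d20 H2] := near_ball e0 c2.
pose d := Num.min d1 d2.
have d0 : 0 < d by rewrite lt_min d10 d20.
have dd1 : d <= d1 by rewrite /d ge_min lexx.
have dd2 : d <= d2 by rewrite /d ge_min lexx orbT.
pose h := d / (`|u| + `|w| + 1).
have nuw0 : 0 < `|u| + `|w| + 1 by rewrite ltr_wpDl // addr_ge0.
have h0 : 0 < h by rewrite divr_gt0.
have close : forall xi eta, 0 < xi < h -> 0 < eta < h ->
   `|p - (p + xi *: u + eta *: w)| < d.
  move=> xi eta /andP[x0 xh] /andP[y0 yh].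
  rewrite (_ : p - (p + xi *: u + eta *: w) = - (xi *: u + eta *: w)); last by rewrite -addrA opprD addrA subrr sub0r.
  rewrite normrN.
  apply: (le_lt_trans (ler_normD _ _)); rewrite !normrZ !ger0_norm ?ltW //.
  apply: (@le_lt_trans _ _ (h * (`|u| + `|w|))).
    by rewrite mulrDr; apply: lerD; apply: ler_wpM2r => //; apply: ltW.
  rewrite /h -mulrA gtr_pMr // ltr_pdivrMl //; lra.
have [xi [eta [xin etan E]]] := mvt2 p w h0 dF (dG u).
have [xi' [eta' [xin' etan' E']]] := mvt2 p u h0 dF (dG w).
have hh : h * h != 0 by rewrite mulf_neq0 // gt_eqF.
have EQ : derive (fun q => derive F q u) (p + xi *: u + eta *: w) w =
          derive (fun q => derive F q w) (p + xi' *: w + eta' *: u) u.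
  apply: (mulIf hh); rewrite -E -E'.
  rewrite [p + h *: u + h *: w]addrAC; ring.
have := H1 _ (lt_le_trans (close _ _ xin etan) dd1).
have := H2 _ (lt_le_trans (close _ _ etan' xin') dd2).
rewrite [p + eta' *: u + xi' *: w]addrAC.
rewrite -/A -/B EQ => L2 L1.
have : `|A - B| < `|A - B| / 2 + `|A - B| / 2.
  rewrite {1}(_ : A - B = (A - derive (fun q => derive F q w) (p + xi' *: w + eta' *: u) u)
     - (B - derive (fun q => derive F q w) (p + xi' *: w + eta' *: u) u)); last by rewrite opprB addrA subrK.
  apply: (le_lt_trans (ler_normB _ _)); exact: (ltrD L1 L2).
by rewrite -splitr ltxx.
Qed.

End Schwarz.

Lemma isd_d (R : realType) (U W : normedModType R) (f : U -> W) a v :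
  differentiable f a -> is_derive a v f (derive f a v).
Proof. by move=> df; apply: derivableP; apply: diff_derivable. Qed.

Section VSchwarz.
Variables (R : realType) (U : normedModType R) (m k : nat).
Implicit Types (G : U -> 'M[R]_(m, k)).

Lemma diff_entry G q i j : differentiable G q ->
  differentiable (fun q => G q i j) q.
Proof.
move=> dG; apply: (@differentiable_comp _ _ _ _ G (fun N : 'M[R]_(m, k) => N i j)) => //.
exact: differentiable_coord.
Qed.

Lemma derive_entry_fun G z i j : (forall q, differentiable G q) ->
  (fun q => derive (fun q => G q i j) q z) = (fun q => derive G q z i j).
Proof.
move=> dG; apply/funext => q.
exact: isd_der (isd_entry i j (isd_d z (dG q))).
Qed.

Lemma vec_schwarz G p u w :
  (forall q, differentiable G q) ->
  (forall z q, differentiable (fun q => derive G q z) q) ->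
  (forall z1 z2 q, differentiable (fun q => derive (fun q => derive G q z1) q z2) q) ->
  derive (fun q => derive G q u) p w = derive (fun q => derive G q w) p u.
Proof.
move=> d0 d1 d2; apply/matrixP => i j.
have E1 := isd_der (isd_entry i j (isd_d w (d1 u p))).
have E2 := isd_der (isd_entry i j (isd_d u (d1 w p))).
rewrite -[LHS]E1 -[RHS]E2.
rewrite -[(fun q => derive G q u i j)](derive_entry_fun _ _ _ d0).
rewrite -[(fun q => derive G q w i j)](derive_entry_fun _ _ _ d0).
apply: schwarz_scalar.
- by move=> q; apply: diff_entry.
- by move=> z q; rewrite (derive_entry_fun _ _ _ d0); apply: diff_entry.
- rewrite (derive_entry_fun _ _ _ d0) (derive_entry_fun _ _ _ (d1 u)).
  by apply: differentiable_continuous; apply: diff_entry.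
- rewrite (derive_entry_fun _ _ _ d0) (derive_entry_fun _ _ _ (d1 w)).
  by apply: differentiable_continuous; apply: diff_entry.
Qed.

End VSchwarz.

Section Smooth.
Variables (R : realType) (n : nat).
Local Notation V := (pt R n).

Lemma smooth0 (Y : V -> V) q : smooth_field Y -> differentiable Y q.
Proof. by move=> sY; exact: (sY [::] q). Qed.
Lemma smooth1 (Y : V -> V) z q : smooth_field Y ->
  differentiable (fun q => derive Y q z) q.
Proof. by move=> sY; exact: (sY [:: z] q). Qed.
Lemma smooth2 (Y : V -> V) z1 z2 q : smooth_field Y ->
  differentiable (fun q => derive (fun q => derive Y q z1) q z2) q.
Proof. by move=> sY; exact: (sY [:: z2; z1] q). Qed.

Lemma smooth_schwarz (Y : V -> V) p u w : smooth_field Y ->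
  derive (fun q => derive Y q u) p w = derive (fun q => derive Y q w) p u.
Proof.
move=> sY; apply: vec_schwarz => *; [exact: smooth0|exact: smooth1|exact: smooth2].
Qed.
End Smooth.

Section Flat.
Variables (R : realType) (n : nat).
Local Notation V := (pt R n).

Lemma dexp (G : V -> V) q (z : V) : differentiable G q ->
  derive G q z = \sum_(i < n.+1 + n.+1) z 0 i *: derive G q (delta_mx 0 i).
Proof.
move=> dG; rewrite (deriveE _ dG) {1}(row_sum_delta z) linear_sum.
by apply: eq_bigr => i _; rewrite linearZ /= deriveE.
Qed.

Lemma L2 (Y Vf : V -> V) p u : smooth_field Y -> (forall q, differentiable Vf q) ->
  is_derive p u (fun q => derive Y q (Vf q))
    (derive Y p (derive Vf p u) + derive (fun q => derive Y q u) p (Vf p)).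
Proof.
move=> sY dV.
apply: (isd_ext (f := fun q => \sum_(i < n.+1 + n.+1)
   Vf q 0 i *: derive Y q (delta_mx 0 i))).
  by move=> q; rewrite (dexp (Vf q) (smooth0 q sY)).
apply: isd_val; last first.
  apply: isd_sum => i; apply: isd_Z.
    exact: (isd_entry 0 i (isd_d u (dV p))).
  exact: (isd_d u (smooth1 (delta_mx 0 i) p sY)).
rewrite big_split /= -(dexp _ (smooth0 p sY)); congr (_ + _).
rewrite (dexp (Vf p) (smooth1 u p sY)); apply: eq_bigr => i _.
by rewrite smooth_schwarz.
Qed.

End Flat.

Section Proj.
Variables (R : realType) (n : nat) (Z0 : pt R n).
Local Notation V := (pt R n).
Variables (p v : V).

Definition dble (f : V -> R) := exists df, is_derive p v f df.

Lemma dbD f g : dble f -> dble g -> dble (fun q => f q + g q).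
Proof. by move=> [? H1] [? H2]; eexists; apply: isd_D H1 H2. Qed.
Lemma dbB f g : dble f -> dble g -> dble (fun q => f q - g q).
Proof. by move=> [? H1] [? H2]; eexists; apply: isd_B H1 H2. Qed.
Lemma dbM f g : dble f -> dble g -> dble (fun q => f q * g q).
Proof. by move=> [? H1] [? H2]; eexists; apply: isd_M H1 H2. Qed.
Lemma dbV f : f p != 0 -> dble f -> dble (fun q => (f q)^-1).
Proof. by move=> f0 [? H1]; eexists; apply: isd_V f0 H1. Qed.
Lemma dbX2 f : dble f -> dble (fun q => f q ^+ 2).
Proof.
move=> [df H]; exists (f p * df + f p * df).
have H2 := isd_M H H.
by apply: (isd_ext _ H2) => q /=; rewrite expr2.
Qed.
Lemma dbgN (F G : V -> V) (dF dG : V) : is_derive p v F dF -> is_derive p v G dG ->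
  dble (fun q => gN (F q) (G q)).
Proof. by move=> H1 H2; eexists; apply: isd_gN H1 H2. Qed.

Lemma isd_P : is_derive p v (fun q : V => q - Z0) v.
Proof.
have H := isd_B (is_derive_id p v) (isd_cst p v Z0).
by rewrite subr0 in H.
Qed.
Lemma isd_JP : is_derive p v (fun q : V => Jop (q - Z0)) (Jop v).
Proof. exact: isd_J isd_P. Qed.

Lemma L1 (W : V -> V) dW : is_derive p v W dW ->
  let P := p - Z0 in let a := gN P P in let b := gN (Jop P) P in
  a ^+ 2 + b ^+ 2 != 0 ->
  exists dc1 dc2, is_derive p v (fun q => tanproj Z0 q (W q))
   (dW - ((dc1 *: P + ((a * gN (W p) P + b * gN (W p) (Jop P)) / (a ^+ 2 + b ^+ 2)) *: v)
        + (dc2 *: Jop P + ((b * gN (W p) P - a * gN (W p) (Jop P)) / (a ^+ 2 + b ^+ 2)) *: Jop v))).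
Proof.
move=> HW P a b den0.
have dP := isd_P; have dJ := isd_JP.
have da : dble (fun q => gN (q - Z0) (q - Z0)) by apply: (dbgN dP dP).
have db : dble (fun q => gN (Jop (q - Z0)) (q - Z0)) by apply: (dbgN dJ dP).
have dgP : dble (fun q => gN (W q) (q - Z0)) by apply: (dbgN HW dP).
have dgJ : dble (fun q => gN (W q) (Jop (q - Z0))) by apply: (dbgN HW dJ).
have dden : dble (fun q => (gN (q - Z0) (q - Z0)) ^+ 2 + (gN (Jop (q - Z0)) (q - Z0)) ^+ 2).
  by apply: dbD; apply: dbX2.
have dinv := dbV (f := fun q => gN (q - Z0) (q - Z0) ^+ 2 + gN (Jop (q - Z0)) (q - Z0) ^+ 2) den0 dden.
have [dc1 H1] : dble (fun q => (gN (q - Z0) (q - Z0) * gN (W q) (q - Z0)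
   + gN (Jop (q - Z0)) (q - Z0) * gN (W q) (Jop (q - Z0))) /
   ((gN (q - Z0) (q - Z0)) ^+ 2 + (gN (Jop (q - Z0)) (q - Z0)) ^+ 2)).
  by apply: dbM => //; apply: dbD; apply: dbM.
have [dc2 H2] : dble (fun q => (gN (Jop (q - Z0)) (q - Z0) * gN (W q) (q - Z0)
   - gN (q - Z0) (q - Z0) * gN (W q) (Jop (q - Z0))) /
   ((gN (q - Z0) (q - Z0)) ^+ 2 + (gN (Jop (q - Z0)) (q - Z0)) ^+ 2)).
  by apply: dbM => //; apply: dbB; apply: dbM.
exists dc1, dc2.
have := isd_B HW (isd_D (isd_Z H1 dP) (isd_Z H2 dJ)).
by apply: isd_ext => q.
Qed.

End Proj.

Section Pair.
Variables (R : realType) (n : nat).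
Local Notation V := (pt R n).

Lemma pairL1 (P dW v t : V) dc1 dc2 c1 c2 : gN P t = 0 -> gN (Jop P) t = 0 ->
  gN (dW - ((dc1 *: P + c1 *: v) + (dc2 *: Jop P + c2 *: Jop v))) t =
  gN dW t - (c1 * gN v t + c2 * gN (Jop v) t).
Proof.
move=> h1 h2; rewrite gNBl !gNDl !gNZl h1 h2; ring.
Qed.

Lemma pair0 (P w t : V) c1 c2 : gN P t = 0 -> gN (Jop P) t = 0 ->
  gN (w - (c1 *: P + c2 *: Jop P)) t = gN w t.
Proof. move=> h1 h2; rewrite gNBl !gNDl !gNZl h1 h2; ring. Qed.

Lemma pair_tan (Z0 p w t : V) : gN (p - Z0) t = 0 -> gN (Jop (p - Z0)) t = 0 ->
  gN (tanproj Z0 p w) t = gN w t.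
Proof. move=> h1 h2; exact: pair0. Qed.
End Pair.

Section RR.
Variable (R : realType).
Implicit Types (f g : R -> R) (x : R).

Lemma dfD f g x : differentiable f x -> differentiable g x ->
  differentiable (fun t => f t + g t) x.
Proof. move=> h1 h2; exact: (differentiableD h1 h2). Qed.
Lemma dfB f g x : differentiable f x -> differentiable g x ->
  differentiable (fun t => f t - g t) x.
Proof. move=> h1 h2; exact: (differentiableB h1 h2). Qed.
Lemma dfM f g x : differentiable f x -> differentiable g x ->
  differentiable (fun t => f t * g t) x.
Proof. move=> h1 h2; exact: (differentiableM h1 h2). Qed.
Lemma dfV f x : differentiable f x -> f x != 0 ->
  differentiable (fun t => (f t)^-1) x.
Proof. move=> h1 h2; exact: (differentiableV h1 h2). Qed.
Lemma dfX2 f x : differentiable f x -> differentiable (fun t => f t ^+ 2) x.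
Proof. move=> h1; exact: (differentiableX 1 h1). Qed.
Lemma dfC (c : R) x : differentiable (fun _ : R => c) x.
Proof. exact: differentiable_cst. Qed.
Lemma dfid x : differentiable (fun t : R => t) x.
Proof. by apply/derivable1_diffP; exact: derivable_id. Qed.
Lemma dfsqrt f x : differentiable f x -> 0 < f x ->
  differentiable (fun t => Num.sqrt (f t)) x.
Proof.
move=> h1 h2; apply: (@differentiable_comp _ _ _ _ f Num.sqrt) => //.
apply/derivable1_diffP; by case: (is_derive1_sqrt h2).
Qed.

Lemma even_d (phi : R -> R) : differentiable phi 0 ->
  is_derive (0:R) (1:R) (fun t => phi (t ^+ 2)) 0.
Proof.
move=> dphi.
have Hsq : is_derive (0:R) (1:R) (fun t : R => t ^+ 2) 0.
  have H := isd_M (is_derive_id (0:R) (1:R)) (is_derive_id (0:R) (1:R)).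
  have H2 : is_derive (0:R) (1:R) (fun t : R => t ^+ 2) (0 * 1 + 0 * 1).
    by apply: (isd_ext _ H) => t /=; rewrite expr2.
  by rewrite !mul0r addr0 in H2.
have d1 : derivable (fun t : R => t ^+ 2) 0 1 by case: Hsq.
have dphi' : differentiable phi ((fun t : R => t ^+ 2) 0) by rewrite /= expr0n.
have d2 : derivable phi ((fun t : R => t ^+ 2) 0) 1 by apply: diff_derivable.
have H := derive1_comp d1 d2.
rewrite !derive1E (isd_der Hsq) mulr0 in H.
split; last exact: H.
have dsq : differentiable (fun t : R => t ^+ 2) 0 by apply/derivable1_diffP.
apply/derivable1_diffP; exact: (differentiable_comp dsq dphi').
Qed.

Lemma near_pos (g : R -> R) : {for 0, continuous g} -> 0 < g 0 ->
  \forall t \near (0:R), 0 < g t.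
Proof.
move=> gc g0; have [d d0 Hd] := near_ball g0 gc.
apply/nbhs_ballP; exists d => // t; rewrite -ball_normE /= => ht.
have := Hd t ht; rewrite ltr_norml; lra.
Qed.

Lemma sqrt_alg (u s' m r : R) : 0 <= m -> m ^+ 2 = u ^+ 2 + s' ^+ 2 -> 0 < m + u ->
  0 <= r -> r ^+ 2 = (m + u) / 2 ->
  r ^+ 2 - (s' / (2 * r)) ^+ 2 = u /\ 2 * r * (s' / (2 * r)) = s'.
Proof.
move=> m0 hm mu r0 hr.
have r2 : 0 < r ^+ 2 by rewrite hr; lra.
have rn0 : r != 0 by apply/eqP => r00; move: r2; rewrite r00 expr0n /= ltxx.
split; last by field.
have mun0 : m + u != 0 by rewrite gt_eqF.
have hs : s' ^+ 2 = (m - u) * (m + u).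
  by rewrite [RHS](_ : _ = m ^+ 2 - u ^+ 2); [rewrite hm; ring | ring].
have -> : (s' / (2 * r)) ^+ 2 = s' ^+ 2 / (4 * r ^+ 2) by field.
by rewrite hr hs; field.
Qed.
End RR.

Section Quad.
Variables (R : realType) (n : nat).
Local Notation V := (pt R n).

Lemma quad_mu (Z : V) r s :
  gN (r *: Z - s *: Jop Z) (r *: Z - s *: Jop Z) =
    (r ^+ 2 - s ^+ 2) * gN Z Z - 2 * r * s * gN (Jop Z) Z /\
  gN (Jop (r *: Z - s *: Jop Z)) (r *: Z - s *: Jop Z) =
    (r ^+ 2 - s ^+ 2) * gN (Jop Z) Z + 2 * r * s * gN Z Z.
Proof.
rewrite JopB !JopZ JopJ !(gNBl, gNDl, gNZl, gNNl, gNBr, gNDr, gNZr, gNNr) gN_JJ.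
rewrite (gN_sym Z (Jop Z)); split; ring.
Qed.

Lemma quad_Zt (P v : V) t : gN P v = 0 -> gN (Jop P) v = 0 ->
  gN (P + t *: v) (P + t *: v) = gN P P + t ^+ 2 * gN v v /\
  gN (Jop (P + t *: v)) (P + t *: v) = gN (Jop P) P + t ^+ 2 * gN (Jop v) v.
Proof.
move=> h1 h2.
have h3 : gN v P = 0 by rewrite gN_sym.
have h4 : gN (Jop v) P = 0 by rewrite gN_J gN_sym.
rewrite JopD JopZ !(gNBl, gNDl, gNZl, gNNl, gNBr, gNDr, gNZr, gNNr) h1 h2 h3 h4.
split; ring.
Qed.
End Quad.

Section Curve.
Variables (R : realType) (n : nat) (Z0 p v : pt R n).
Local Notation V := (pt R n).

Definition cP := p - Z0.
Definition ca := gN cP cP.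
Definition cb := gN (Jop cP) cP.
Definition Au (t : R) := ca + t * gN v v.
Definition Bu (t : R) := cb + t * gN (Jop v) v.
Definition Kk (t : R) := Au t ^+ 2 + Bu t ^+ 2.
Definition uu (t : R) := (ca * Au t + cb * Bu t) / Kk t.
Definition ss (t : R) := (cb * Au t - ca * Bu t) / Kk t.
Definition mm (t : R) := Num.sqrt (uu t ^+ 2 + ss t ^+ 2).
Definition rr (t : R) := Num.sqrt ((mm t + uu t) / 2).
Definition sg (t : R) := ss t / (2 * rr t).
Definition Zt (t : R) := cP + t *: v.
Definition gam (t : R) := Z0 + (rr (t ^+ 2) *: Zt t - sg (t ^+ 2) *: Jop (Zt t)).

Lemma on_sphere t : gN cP v = 0 -> gN (Jop cP) v = 0 -> Kk (t ^+ 2) != 0 ->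
  0 < mm (t ^+ 2) + uu (t ^+ 2) -> hsphere Z0 ca cb (gam t).
Proof.
move=> h1 h2 K0 L0.
have [hA hB] := quad_Zt t h1 h2.
set r := rr (t ^+ 2); set s' := ss (t ^+ 2); set u := uu (t ^+ 2); set m := mm (t ^+ 2).
have m0 : 0 <= m by exact: sqrtr_ge0.
have hm : m ^+ 2 = u ^+ 2 + s' ^+ 2 by rewrite /m /mm sqr_sqrtr // addr_ge0 // sqr_ge0.
have r0 : 0 <= r by exact: sqrtr_ge0.
have hr : r ^+ 2 = (m + u) / 2 by rewrite /r /rr sqr_sqrtr //; lra.
have [e1 e2] := sqrt_alg m0 hm L0 r0 hr.
have eg : gam t - Z0 = r *: Zt t - sg (t ^+ 2) *: Jop (Zt t) by rewrite /gam addrC addKr.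
have [q1 q2] := quad_mu (Zt t) r (sg (t ^+ 2)).
rewrite /hsphere /gtN /= eg q1 q2 /Zt hA hB.
rewrite (_ : sg (t ^+ 2) = s' / (2 * r)) // e1 e2.
rewrite /u /s' /uu /ss -/(Au (t ^+ 2)) -/(Bu (t ^+ 2)).
move: K0; rewrite /Kk -/(Au (t ^+ 2)) -/(Bu (t ^+ 2)) => K0.
by split; field.
Qed.


Section Zero.
Variable D0 : ca ^+ 2 + cb ^+ 2 != 0.

Lemma Au0 : Au 0 = ca. Proof. by rewrite /Au mul0r addr0. Qed.
Lemma Bu0 : Bu 0 = cb. Proof. by rewrite /Bu mul0r addr0. Qed.
Lemma Kk0 : Kk 0 = ca ^+ 2 + cb ^+ 2. Proof. by rewrite /Kk Au0 Bu0. Qed.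
Lemma uu0 : uu 0 = 1. Proof. by rewrite /uu Kk0 Au0 Bu0; field. Qed.
Lemma ss0 : ss 0 = 0. Proof. by rewrite /ss Au0 Bu0 [cb * ca]mulrC subrr mul0r. Qed.
Lemma mm0 : mm 0 = 1.
Proof. by rewrite /mm uu0 ss0 expr1n expr0n /= addr0 sqrtr1. Qed.
Lemma rr0 : rr 0 = 1.
Proof.
rewrite /rr mm0 uu0 (_ : (1 + 1) / 2 = 1) ?sqrtr1 //.
by rewrite divff // (_ : 1 + 1 = 2%:R) ?pnatr_eq0 // -natrD.
Qed.
Lemma sg0 : sg 0 = 0. Proof. by rewrite /sg ss0 mul0r. Qed.

Lemma dAu x : differentiable Au x.
Proof. rewrite /Au; apply: dfD; [exact: dfC | apply: dfM; [exact: dfid | exact: dfC]]. Qed.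
Lemma dBu x : differentiable Bu x.
Proof. rewrite /Bu; apply: dfD; [exact: dfC | apply: dfM; [exact: dfid | exact: dfC]]. Qed.
Lemma dKk x : differentiable Kk x.
Proof. rewrite /Kk; apply: dfD; apply: dfX2; [exact: dAu | exact: dBu]. Qed.
Lemma duu : differentiable uu 0.
Proof.
rewrite /uu; apply: dfM; last by apply: dfV; [exact: dKk | rewrite Kk0].
apply: dfD; apply: dfM; (exact: dfC || exact: dAu || exact: dBu).
Qed.
Lemma dss : differentiable ss 0.
Proof.
rewrite /ss; apply: dfM; last by apply: dfV; [exact: dKk | rewrite Kk0].
apply: dfB; apply: dfM; (exact: dfC || exact: dAu || exact: dBu).
Qed.
Lemma dmm : differentiable mm 0.
Proof.
rewrite /mm; apply: dfsqrt; last by rewrite uu0 ss0 expr1n expr0n /= addr0 ltr01.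
by apply: dfD; apply: dfX2; [exact: duu | exact: dss].
Qed.
Lemma drr : differentiable rr 0.
Proof.
rewrite /rr; apply: dfsqrt; last by rewrite mm0 uu0; lra.
apply: dfM; last exact: dfC.
by apply: dfD; [exact: dmm | exact: duu].
Qed.
Lemma dsg : differentiable sg 0.
Proof.
rewrite /sg; apply: dfM; first exact: dss.
apply: dfV; first by apply: dfM; [exact: dfC | exact: drr].
by rewrite rr0 mulr1 pnatr_eq0.
Qed.

Lemma dgam : is_derive (0:R) (1:R) gam v.
Proof.
have dZ : is_derive (0:R) (1:R) Zt v.
  have H := isd_D (isd_cst (0:R) (1:R) cP) (isd_Z (is_derive_id (0:R) (1:R)) (isd_cst (0:R) (1:R) v)).
  rewrite scale1r scaler0 addr0 add0r in H.
  exact: (isd_ext _ H).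
have dJZ := isd_J dZ.
have H := isd_D (isd_cst (0:R) (1:R) Z0) (isd_B (isd_Z (even_d drr) dZ) (isd_Z (even_d dsg) dJZ)).
rewrite /= expr0n /= rr0 sg0 !scale0r !add0r scale1r subr0 in H.
exact: (isd_ext _ H).
Qed.

Lemma gam0 : gam 0 = p.
Proof.
rewrite /gam expr0n /= rr0 sg0 scale0r subr0 scale1r /Zt scale0r addr0 /cP.
by rewrite addrC subrK.
Qed.

Lemma cont_sq (phi : R -> R) : differentiable phi 0 ->
  {for (0:R), continuous (fun t : R => phi (t ^+ 2))}.
Proof.
move=> dphi; apply: differentiable_continuous; apply/derivable1_diffP.
by case: (even_d dphi).
Qed.

Lemma TDL (f : V -> R) : gN cP v = 0 -> gN (Jop cP) v = 0 ->
  differentiable f p -> (forall q, hsphere Z0 ca cb q -> f q = 0) ->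
  derive f p v = 0.
Proof.
move=> h1 h2 df f0.
have [dg1 dg2] := dgam.
have dgd : differentiable gam 0 by apply/derivable1_diffP.
have df' : differentiable f (gam 0) by rewrite gam0.
have N1 : \forall t \near (0:R), 0 < Kk (t ^+ 2).
  apply: near_pos; first exact: (cont_sq (dKk 0)).
  rewrite expr0n /= Kk0 lt_def D0 /=; exact: addr_ge0 (sqr_ge0 _) (sqr_ge0 _).
have dL : differentiable (fun t => mm t + uu t) 0 by apply: dfD; [exact: dmm | exact: duu].
have N2 : \forall t \near (0:R), 0 < mm (t ^+ 2) + uu (t ^+ 2).
  apply: near_pos; first exact: (cont_sq dL).
  rewrite expr0n /= mm0 uu0; lra.
have Hnear : \forall t \near (0:R), (f \o gam) t = (fun _ => 0 : R) t.
  apply: filterS2 N1 N2 => t k1 k2 /=; apply: f0; apply: on_sphere => //.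
  by rewrite gt_eqF.
have E1 : derive (f \o gam) (0:R) (1:R) = derive (fun _ : R => 0 : R) (0:R) (1:R).
  by apply: near_eq_derive.
rewrite derive_cst in E1.
have dc := differentiable_comp dgd df'.
rewrite (deriveE _ dc) (diff_comp dgd df') /= -(deriveE _ dgd) dg2 in E1.
by rewrite (deriveE _ df) -gam0.
Qed.
End Zero.
End Curve.

Section Gen.
Variables (R : realType) (U : normedModType R).
Implicit Types (f g : U -> R) (x : U).

Lemma gdD f g x : differentiable f x -> differentiable g x ->
  differentiable (fun t => f t + g t) x.
Proof. move=> h1 h2; exact: (differentiableD h1 h2). Qed.
Lemma gdB f g x : differentiable f x -> differentiable g x ->
  differentiable (fun t => f t - g t) x.
Proof. move=> h1 h2; exact: (differentiableB h1 h2). Qed.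
Lemma gdM f g x : differentiable f x -> differentiable g x ->
  differentiable (fun t => f t * g t) x.
Proof. move=> h1 h2; exact: (differentiableM h1 h2). Qed.
Lemma gdsum m (h : 'I_m -> U -> R) x : (forall i, differentiable (h i) x) ->
  differentiable (fun t => \sum_(i < m) h i t) x.
Proof. by move=> H; rewrite -fct_sumE; apply: differentiable_sum. Qed.
Lemma gdid x : differentiable (id : U -> U) x.
Proof. exact: ex_diff. Qed.
End Gen.

Section Pt.
Variables (R : realType) (n : nat).
Local Notation V := (pt R n).
Implicit Types (F G : V -> V).

Lemma dgN F G p : differentiable F p -> differentiable G p ->
  differentiable (fun q => gN (F q) (G q)) p.
Proof.
move=> dF dG; rewrite (_ : (fun q => gN (F q) (G q)) = fun q => \sum_(k < n.+1)
  (F q 0 (lshift _ k) * G q 0 (lshift _ k) - F q 0 (rshift _ k) * G q 0 (rshift _ k))).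
  by apply: gdsum => k; apply: gdB; apply: gdM; apply: diff_entry.
by apply/funext => q; rewrite gNE.
Qed.

Lemma dgNJ F G p : differentiable F p -> differentiable G p ->
  differentiable (fun q => gN (F q) (Jop (G q))) p.
Proof.
move=> dF dG; rewrite (_ : (fun q => gN (F q) (Jop (G q))) = fun q => \sum_(k < n.+1)
  (F q 0 (lshift _ k) * G q 0 (rshift _ k) + F q 0 (rshift _ k) * G q 0 (lshift _ k))).
  by apply: gdsum => k; apply: gdD; apply: gdM; apply: diff_entry.
apply/funext => q; rewrite gNE; apply: eq_bigr => k _; rewrite Jl Jr; ring.
Qed.

Lemma dP (Z0 : V) p : differentiable (fun q : V => q - Z0) p.
Proof. exact: (differentiableB (gdid p) (differentiable_cst Z0 p)). Qed.

End Pt.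

Lemma L1pair (R : realType) (n : nat) (Z0 p v t : pt R n) (W : pt R n -> pt R n) d1 d2 w0 :
  is_derive p v W (d1 + d2) -> W p = w0 ->
  let P := p - Z0 in let a := gN P P in let b := gN (Jop P) P in
  a ^+ 2 + b ^+ 2 != 0 -> gN P t = 0 -> gN (Jop P) t = 0 ->
  gN (derive (fun q => tanproj Z0 q (W q)) p v) t =
  gN d1 t + gN d2 t - ((a * gN w0 P + b * gN w0 (Jop P)) / (a ^+ 2 + b ^+ 2) * gN v t
           + (b * gN w0 P - a * gN w0 (Jop P)) / (a ^+ 2 + b ^+ 2) * gN (Jop v) t).
Proof.
move=> HW Hw P a b D0 t1 t2.
have [dc1 [dc2 H]] := L1 (Z0 := Z0) HW D0.
rewrite (isd_der H) pairL1 //.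
by rewrite (gNDl d1 d2 t) Hw.
Qed.

Lemma alg_core (R : realType) (GA GB GC dA T1 dB T2 KA KB : R) :
  GA = dA + T1 - KA -> GB = dB + T2 - KB -> GC = dA - dB -> T1 = T2 ->
  GA - GB - GC = - KA + KB.
Proof. by move=> -> -> -> ->; ring. Qed.

Lemma gN_dlin (R : realType) (n : nat) (Y : pt R n -> pt R n) p u w t :
  differentiable Y p ->
  gN (derive Y p (u - w)) t = gN (derive Y p u) t - gN (derive Y p w) t.
Proof. by move=> dY; rewrite !(deriveE _ dY) linearB gNBl. Qed.

Section Main.
Variables (R : realType) (n : nat).
Local Notation V := (pt R n).

Lemma tdl_use (Z0 p v : V) (F G : V -> V) dG :
  ca Z0 p ^+ 2 + cb Z0 p ^+ 2 != 0 -> gN (cP Z0 p) v = 0 -> gN (Jop (cP Z0 p)) v = 0 ->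
  (forall q, differentiable F q) -> differentiable G p -> is_derive p v G dG ->
  (forall q, hsphere Z0 (ca Z0 p) (cb Z0 p) q -> gN (F q) (G q) = 0) ->
  gN (derive F p v) (G p) + gN (F p) dG = 0.
Proof.
move=> D0 t1 t2 dF dG' HG f0.
have H := isd_gN (isd_d v (dF p)) HG.
rewrite -(isd_der H); apply: (TDL D0 t1 t2) => //.
exact: dgN.
Qed.

Lemma tdl_useJ (Z0 p v : V) (F G : V -> V) dG :
  ca Z0 p ^+ 2 + cb Z0 p ^+ 2 != 0 -> gN (cP Z0 p) v = 0 -> gN (Jop (cP Z0 p)) v = 0 ->
  (forall q, differentiable F q) -> differentiable G p -> is_derive p v G dG ->
  (forall q, hsphere Z0 (ca Z0 p) (cb Z0 p) q -> gN (F q) (Jop (G q)) = 0) ->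
  gN (derive F p v) (Jop (G p)) + gN (F p) (Jop dG) = 0.
Proof.
move=> D0 t1 t2 dF dG' HG f0.
have H := isd_gN (isd_d v (dF p)) (isd_J HG).
rewrite -(isd_der H); apply: (TDL D0 t1 t2) => //.
exact: dgNJ.
Qed.

Lemma curv_split (Z0 p t : V) (X Y : V -> V) :
  gN (p - Z0) t = 0 -> gN (Jop (p - Z0)) t = 0 ->
  gN (curv Z0 X Y Y p) t = gN (derive (nabla Z0 Y Y) p (X p)) t
    - gN (derive (nabla Z0 X Y) p (Y p)) t - gN (derive Y p (lieb X Y p)) t.
Proof.
move=> t1 t2; rewrite /curv gNBl gNBl.
by congr (_ - _ - _); apply: pair_tan.
Qed.

Lemma curv_formula (Z0 p : V) (X Y : V -> V) x y t :
  smooth_field X -> smooth_field Y -> X p = x -> Y p = y ->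
  let P := p - Z0 in let a := gN P P in let b := gN (Jop P) P in
  a ^+ 2 + b ^+ 2 != 0 -> gN P t = 0 -> gN (Jop P) t = 0 ->
  gN (curv Z0 X Y Y p) t =
   - ((a * gN (derive Y p y) P + b * gN (derive Y p y) (Jop P)) / (a ^+ 2 + b ^+ 2) * gN x t
      + (b * gN (derive Y p y) P - a * gN (derive Y p y) (Jop P)) / (a ^+ 2 + b ^+ 2) * gN (Jop x) t)
   + ((a * gN (derive Y p x) P + b * gN (derive Y p x) (Jop P)) / (a ^+ 2 + b ^+ 2) * gN y t
      + (b * gN (derive Y p x) P - a * gN (derive Y p x) (Jop P)) / (a ^+ 2 + b ^+ 2) * gN (Jop y) t).
Proof.
move=> sX sY Xp Yp P a b D0 t1 t2.
have dY : forall q, differentiable Y q by move=> q; exact: smooth0.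
have dX : forall q, differentiable X q by move=> q; exact: smooth0.
have HA := L2 p x sY dY; have HB := L2 p y sY dX.
move: HA HB; rewrite Xp Yp => HA HB.
have wA : (fun q => derive Y q (Y q)) p = derive Y p y by rewrite /= Yp.
have wB : (fun q => derive Y q (X q)) p = derive Y p x by rewrite /= Xp.
have eA := L1pair (Z0 := Z0) HA wA D0 t1 t2.
have eB := L1pair (Z0 := Z0) HB wB D0 t1 t2.
have eC := gN_dlin (derive Y p x) (derive X p y) t (dY p).
have eS : gN (derive (fun q => derive Y q x) p y) t = gN (derive (fun q => derive Y q y) p x) t.
  by rewrite (smooth_schwarz p x y sY).
have := alg_core eA eB eC eS.
rewrite (curv_split X Y t1 t2) Xp Yp /lieb Xp Yp.
exact.
Qed.
End Main.

Lemma final_alg1 (R : realType) (nu nut a b gyyP gyyJ gyxP gyxJ xx Jxx yx Jyx yy xy pi : R) :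
  0 < nu ^+ 2 + nut ^+ 2 -> a = nu / (nu ^+ 2 + nut ^+ 2) -> b = - nut / (nu ^+ 2 + nut ^+ 2) ->
  gyyP = - yy -> gyyJ = 0 -> gyxP = - yx -> gyxJ = 0 -> Jxx = 0 -> Jyx = 0 ->
  pi = yy * xx - xy * yx -> xy = yx -> pi != 0 ->
  (- ((a * gyyP + b * gyyJ) / (a ^+ 2 + b ^+ 2) * xx
      + (b * gyyP - a * gyyJ) / (a ^+ 2 + b ^+ 2) * Jxx)
   + ((a * gyxP + b * gyxJ) / (a ^+ 2 + b ^+ 2) * yx
      + (b * gyxP - a * gyxJ) / (a ^+ 2 + b ^+ 2) * Jyx)) / pi = nu.
Proof.
move=> S0 -> -> -> -> -> -> -> -> epi exy pi0.
have S0' : nu ^+ 2 + nut ^+ 2 != 0 by rewrite gt_eqF.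
rewrite epi exy in pi0 *.
by field; apply/andP; split.
Qed.

Lemma final_alg2 (R : realType) (nu nut a b gyyP gyyJ gyxP gyxJ xx xJ JJ yx yJ JyJ yy xy pi : R) :
  0 < nu ^+ 2 + nut ^+ 2 -> a = nu / (nu ^+ 2 + nut ^+ 2) -> b = - nut / (nu ^+ 2 + nut ^+ 2) ->
  gyyP = - yy -> gyyJ = 0 -> gyxP = - yx -> gyxJ = 0 -> xJ = 0 -> JJ = - xx -> yJ = 0 ->
  JyJ = - yx ->
  pi = yy * xx - xy * yx -> xy = yx -> pi != 0 ->
  (- ((a * gyyP + b * gyyJ) / (a ^+ 2 + b ^+ 2) * xJ
      + (b * gyyP - a * gyyJ) / (a ^+ 2 + b ^+ 2) * JJ)
   + ((a * gyxP + b * gyxJ) / (a ^+ 2 + b ^+ 2) * yJ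
      + (b * gyxP - a * gyxJ) / (a ^+ 2 + b ^+ 2) * JyJ)) / pi = nut.
Proof.
move=> S0 -> -> -> -> -> -> -> -> -> -> epi exy pi0.
have S0' : nu ^+ 2 + nut ^+ 2 != 0 by rewrite gt_eqF.
rewrite epi exy in pi0 *.
by field; apply/andP; split.
Qed.

Theorem theorem3p2 (R : realType) (n : nat) (nu nut : R) (Z0 : pt R n) :
  (2 <= n)%N -> 0 < nu ^+ 2 + nut ^+ 2 ->
  const_totally_real_curv Z0 (nu / (nu ^+ 2 + nut ^+ 2))
    (- nut / (nu ^+ 2 + nut ^+ 2)) nu nut.
Proof.
move=> _ S0 p x y hp tx ty pi0 tr X Y [sX tX] [sY tY] Xp Yp.
case: hp => hA hB; rewrite /gtN in hB.
have S0' : nu ^+ 2 + nut ^+ 2 != 0 by rewrite gt_eqF.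
have D0 : gN (p - Z0) (p - Z0) ^+ 2 + gN (Jop (p - Z0)) (p - Z0) ^+ 2 != 0.
  rewrite hA hB (_ : _ + _ = (nu ^+ 2 + nut ^+ 2)^-1); first by rewrite invr_eq0.
  by field.
case: tx => tx1 tx2; case: ty => ty1 ty2.
case: tr => _ [rxx [rxy [ryx ryy]]].
have dY : forall q, differentiable Y q by move=> q; exact: smooth0.
have eca : ca Z0 p = nu / (nu ^+ 2 + nut ^+ 2) by exact: hA.
have ecb : cb Z0 p = - nut / (nu ^+ 2 + nut ^+ 2) by exact: hB.
have sph : forall q, hsphere Z0 (ca Z0 p) (cb Z0 p) q -> tangentv Z0 q (Y q).
  by move=> q; rewrite eca ecb; exact: tY.
have f1 : forall q, hsphere Z0 (ca Z0 p) (cb Z0 p) q -> gN (Y q) (q - Z0) = 0.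
  by move=> q /sph [h _]; rewrite gN_sym.
have f2 : forall q, hsphere Z0 (ca Z0 p) (cb Z0 p) q -> gN (Y q) (Jop (q - Z0)) = 0.
  by move=> q /sph [_ h]; rewrite gN_sym.
have E1 := tdl_use (Z0 := Z0) (p := p) D0 ty1 ty2 dY (dP Z0 p) (isd_P Z0 p y) f1.
have E2 := tdl_useJ (Z0 := Z0) (p := p) D0 ty1 ty2 dY (dP Z0 p) (isd_P Z0 p y) f2.
have E3 := tdl_use (Z0 := Z0) (p := p) D0 tx1 tx2 dY (dP Z0 p) (isd_P Z0 p x) f1.
have E4 := tdl_useJ (Z0 := Z0) (p := p) D0 tx1 tx2 dY (dP Z0 p) (isd_P Z0 p x) f2.
rewrite /= Yp in E1 E2 E3 E4.
have G1 : gN (derive Y p y) (p - Z0) = - gN y y by apply/eqP; rewrite -addr_eq0 E1.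
have G2 : gN (derive Y p y) (Jop (p - Z0)) = 0 by rewrite ryy addr0 in E2.
have G3 : gN (derive Y p x) (p - Z0) = - gN y x by apply/eqP; rewrite -addr_eq0 E3.
have G4 : gN (derive Y p x) (Jop (p - Z0)) = 0 by rewrite ryx addr0 in E4.
have Jxx : gN (Jop x) x = 0 by rewrite gN_J.
have Jyx : gN (Jop y) x = 0 by rewrite gN_J.
have exy : gN x y = gN y x by rewrite gN_sym.
split.
- have F := curv_formula sX sY Xp Yp D0 tx1 tx2.
  rewrite F.
  exact: (final_alg1 S0 hA hB G1 G2 G3 G4 Jxx Jyx (erefl _) exy pi0).
- have t1 : gN (p - Z0) (Jop x) = 0 by rewrite -gN_J.
  have t2 : gN (Jop (p - Z0)) (Jop x) = 0 by rewrite gN_JJ tx1 oppr0.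
  have F := curv_formula sX sY Xp Yp D0 t1 t2.
  rewrite F.
  exact: (final_alg2 S0 hA hB G1 G2 G3 G4 rxx (gN_JJ x x) ryx (gN_JJ y x) (erefl _) exy pi0).
Qed.
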